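(* Let $A$ be an algebra over $B$ and let $e\in B$ be an idempotent. Then a $B$-linear $n$-bracket $\{\!\{-,\ldots,-\}\!\}$ on $A$ induces a unique $eBe$-linear $n$-bracket on $eAe$, namely $\{\!\{ea_1e,\ldots,ea_ne\}\!\}=(e\otimes\cdots\otimes e)\{\!\{a_1,\ldots,a_n\}\!\}(e\otimes\cdots\otimes e)$. If moreover $B=BeB$ and $\{\!\{-,\ldots,-\}\!\}$ is differential for $Q\in(D_BA)_n$, then the induced $eBe$-linear $n$-bracket is differential for $\operatorname{Tr}(Q)\in(D_{eBe}eAe)_n$.
   Context: $\Bbbk$ field of characteristic $0$, $\otimes=\otimes_\Bbbk$; $A$ an associative unital $\Bbbk$-algebra containing a subalgebra $B$. Outer bimodule structure on $A^{\otimes n}$: $b(a_1\otimes\cdots\otimes a_n)c=ba_1\otimes\cdots\otimes a_nc$; $\tau_\sigma(a_1\otimes\cdots\otimes a_n)=a_{\sigma^{-1}(1)}\otimes\cdots\otimes a_{\sigma^{-1}(n)}$. A $B$-linear $n$-bracket is a $\Bbbk$-multilinear map $A^{\times n}\to A^{\otimes n}$ vanishing when an argument lies in $B$, a derivation in its last argument for the outer structure, with $\tau_{(1\ldots n)}\circ\{\!\{-,\ldots,-\}\!\}\circ\tau_{(1\ldots n)}^{-1}=(-1)^{n+1}\{\!\{-,\ldots,-\}\!\}$. $D_{A/B}=\operatorname{Der}_B(A,A\otimes A)$ (outer structure) with $A$-bimodule structure $(b\delta c)(a)=\delta(a)'c\otimes b\delta(a)''$; $D_BA=T_AD_{A/B}$.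 For $Q=\delta_1\cdots\delta_n$, $\{\!\{-,\ldots,-\}\!\}_Q=\sum_{i=0}^{n-1}(-1)^{(n-1)i}\tau^i_{(1\ldots n)}\circ\widetilde{\{\!\{\}\!\}}_Q\circ\tau^{-i}_{(1\ldots n)}$, $\widetilde{\{\!\{a_1,\ldots,a_n\}\!\}}_Q=\delta_n(a_n)'\delta_1(a_1)''\otimes\delta_1(a_1)'\delta_2(a_2)''\otimes\cdots\otimes\delta_{n-1}(a_{n-1})'\delta_n(a_n)''$; a bracket is differential for $Q$ if it equals $\{\!\{\}\!\}_Q$ (linear extension). When $B=BeB$, choose a decomposition $1=\sum_ip_ieq_i$ ($p_i,q_i\in B$); then $e(D_BA)e$ is identified with $D_{eBe}eAe$ (on degree one, $e\delta e$ acts by $eae\mapsto e\delta(a)'e\otimes e\delta(a)''e$), and $\operatorname{Tr}(Q)=\sum_ieq_iQp_ie$ viewed in $D_{eBe}eAe$. *)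

(* Defs.v *)
From Stdlib Require List.
From HB Require Import structures.
From mathcomp Require Import all_boot all_order all_algebra.

Set Implicit Arguments.
Unset Strict Implicit.
Unset Printing Implicit Defensive.

Import GRing.Theory.
Local Open Scope ring_scope.

(* Conventions.
   - [k] is the ground field, [A] a [k]-algebra ([algType k]).
   - Subalgebras and other subsets of [A] are Prop-valued predicates [A -> Prop].
   - An element of the tensor power (S)^{(x)n} (over k) of a k-subspace S of A
     is represented by a formal k-linear combination of pure tensors,
     i.e. a list of pairs (coefficient, n-tuple of elements of S);
     the tuple a : 'I_n -> A stands for a_0 (x) ... (x) a_{n-1}.
   - Two such formal combinations denote the same element of S^{(x)n}
     iff every k-multilinear form on S^n takes the same value on them
     ([teq_on S]); this is exactly equality in S^{(x)n}, since multilinear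
     forms on S^n are the linear forms on S^{(x)n} and these separate points.
   - Indices are 0-based: slot 0 is the "first" tensor factor, slot n.-1 the
     "last" one. *)

Section Tensors.
Variables (k : fieldType) (A : algType k).

Definition tensor (n : nat) := seq (k * ('I_n -> A)).

Definition upd n (a : 'I_n -> A) (i : 'I_n) (x : A) : 'I_n -> A :=
  fun j => if j == i then x else a j.

Definition updl n (a : 'I_n -> A) (x : A) : 'I_n -> A :=
  fun j => if val j == n.-1 then x else a j.

Definition all_in (S : A -> Prop) n (a : 'I_n -> A) : Prop := forall i, S (a i).

Definition multilinear_on (S : A -> Prop) n (phi : ('I_n -> A) -> k) : Prop :=
  forall (a : 'I_n -> A) (i : 'I_n) (c : k) (x y : A),
    all_in S a -> S x -> S y ->
    phi (upd a i (c *: x + y)) = c * phi (upd a i x) + phi (upd a i y).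

Definition tev n (phi : ('I_n -> A) -> k) (x : tensor n) : k :=
  \sum_(p <- x) p.1 * phi p.2.

Definition tensor_on (S : A -> Prop) n (x : tensor n) : Prop :=
  forall p, Stdlib.Lists.List.In p x -> all_in S p.2.

Definition teq_on (S : A -> Prop) n (x y : tensor n) : Prop :=
  forall phi, multilinear_on S phi -> tev phi x = tev phi y.

Definition tzero n : tensor n := [::].
Definition tadd n (x y : tensor n) : tensor n := x ++ y.
Definition tscale n (c : k) (x : tensor n) : tensor n :=
  [seq (c * p.1, p.2) | p <- x].
Definition tsum I n (s : seq I) (F : I -> tensor n) : tensor n :=
  flatten [seq F i | i <- s].

Definition tmap n m (f : ('I_n -> A) -> ('I_m -> A)) (x : tensor n) : tensor m :=
  [seq (p.1, f p.2) | p <- x].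

Definition tlmul n (b : A) (x : tensor n) : tensor n :=
  tmap (fun a j => if val j == 0%N then b * a j else a j) x.
Definition trmul n (x : tensor n) (c : A) : tensor n :=
  tmap (fun a j => if val j == n.-1 then a j * c else a j) x.

Definition tau_tup n (a : 'I_n -> A) : 'I_n -> A := fun j => a (ord_pred j).
Definition tauinv_tup n (a : 'I_n -> A) : 'I_n -> A := fun j => a (ordS j).
Definition tau_t n (x : tensor n) : tensor n := tmap (@tau_tup n) x.

Definition tsand n (e : A) (x : tensor n) : tensor n :=
  tmap (fun a j => e * a j * e) x.

(* [is_bracket S Bs n br] : br is a Bs-linear n-bracket on the algebra S
   (S a subalgebra-like subset of A, e.g. A itself or a corner eAe,
   with multiplication that of A), Bs the subalgebra of S. *)
Definition is_bracket (S Bs : A -> Prop) n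
    (br : ('I_n -> A) -> tensor n) : Prop :=
  [/\
      (forall a, all_in S a -> tensor_on S (br a)),
      (forall a i c x y, all_in S a -> S x -> S y ->
         teq_on S (br (upd a i (c *: x + y)))
                  (tadd (tscale c (br (upd a i x))) (br (upd a i y)))),
      (forall a i, all_in S a -> Bs (a i) -> teq_on S (br a) (tzero n)),
      (forall a x y, all_in S a -> S x -> S y ->
         teq_on S (br (updl a (x * y)))
                  (tadd (tlmul x (br (updl a y))) (trmul (br (updl a x)) y)))
    &
      (forall a, all_in S a ->
         teq_on S (tau_t (br (tauinv_tup a)))
                  (tscale ((-1) ^+ n.+1) (br a)))].

Definition dder := A -> tensor 2.

Definition fst2 : 'I_2 := ord0.
Definition snd2 : 'I_2 := ord_max.

Definition is_dder (S Bs : A -> Prop) (d : dder) : Prop :=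
  [/\ (forall x, S x -> tensor_on S (d x)),
      (forall c x y, S x -> S y ->
         teq_on S (d (c *: x + y)) (tadd (tscale c (d x)) (d y))),
      (forall x, Bs x -> teq_on S (d x) (tzero 2))
    & (forall x y, S x -> S y ->
         teq_on S (d (x * y)) (tadd (tlmul x (d y)) (trmul (d x) y)))].

(* A-bimodule structure on D_{A/B}: (b d c)(a) = d(a)' c (x) b d(a)'' *)
Definition dact (b : A) (d : dder) (c : A) : dder :=
  fun a => [seq (p.1, fun j : 'I_2 => if j == fst2 then p.2 fst2 * c
                                      else b * p.2 snd2) | p <- d a].

(* degree one of the identification e(D_B A)e = D_{eBe} eAe:
   e d e acts on eAe by  x |-> e d(x)' e (x) e d(x)'' e
   (here d is already of the form e d0 e, so we apply it to x and sandwich) *)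
Definition dcorner (e : A) (d : dder) : dder := fun x => tsand e (d x).

(* all choices of one term in each of the lists L 0, ..., L (m-1):
   the "expansion" of the product of the corresponding tensors *)
Fixpoint prodl (L : nat -> tensor 2) (m : nat) : seq (k * (nat -> 'I_2 -> A)) :=
  match m with
  | 0 => [:: (1, fun _ _ => 0)]
  | m'.+1 => [seq (p.1 * q.1, fun i => if i == m' then q.2 else p.2 i)
               | p <- prodl L m', q <- L m']
  end.

(* ~{{a_1,...,a_n}}_Q for Q = d_1 ... d_n, with Sweedler notation:
   d_n(a_n)' d_1(a_1)'' (x) d_1(a_1)' d_2(a_2)'' (x) ... (x)
   d_{n-1}(a_{n-1})' d_n(a_n)''  ; 0-based: slot j carries
   d_{j-1}(a_{j-1})' d_j(a_j)'' (indices mod n). *)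
Definition brtilde n (ds : 'I_n -> dder) (a : 'I_n -> A) : tensor n :=
  let L := fun i : nat => if insub i is Some j then ds j (a j) else [::] in
  [seq (c.1, fun j : 'I_n => c.2 (val (ord_pred j)) fst2 * c.2 (val j) snd2)
  | c <- prodl L n].

Definition brQ1 n (ds : 'I_n -> dder) (a : 'I_n -> A) : tensor n :=
  tsum (iota 0 n) (fun i =>
    tscale ((-1) ^+ (n.-1 * i))
      (tmap (fun b => iter i (@tau_tup n) b)
            (brtilde ds (iter i (@tauinv_tup n) a)))).

(* An element Q of (D_B A)_n = D_{A/B} (x)_A ... (x)_A D_{A/B} is given by a
   representative: a finite list Qs of n-tuples (d_1,...,d_n), standing for
   Q = sum over the list of the products d_1 ... d_n.  {{ }}_Q is the
   linear extension. *)
Definition brQ n (Qs : seq ('I_n -> dder)) (a : 'I_n -> A) : tensor n :=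
  tsum Qs (fun ds => brQ1 ds a).

Definition is_differential (S : A -> Prop) n
    (br : ('I_n -> A) -> tensor n) (Qs : seq ('I_n -> dder)) : Prop :=
  forall a, all_in S a -> teq_on S (br a) (brQ Qs a).

Definition corner (e : A) : A -> Prop := fun x => e * x * e = x.
Definition cornerB (e : A) (B : A -> Prop) : A -> Prop :=
  fun x => exists2 b, B b & x = e * b * e.

Definition is_subalg (B : A -> Prop) : Prop :=
  [/\ B 1, (forall x y, B x -> B y -> B (x + y)),
      (forall (c : k) x, B x -> B (c *: x)) & (forall x y, B x -> B y -> B (x * y))].

Definition induced_by (e : A) n (br br' : ('I_n -> A) -> tensor n) : Prop :=
  forall a, teq_on (corner e) (br' (fun i => e * a i * e)) (tsand e (br a)).

(* Tr(Q) = sum_i e q_i Q p_i e, for a decomposition 1 = sum_i p_i e q_i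
   (pq = list of the pairs (p_i, q_i)), viewed in (D_{eBe} eAe)_n:
   for Q = d_1 ... d_n, inserting 1 = sum_j p_j e q_j (and e = e e) between
   consecutive factors, e q_i Q p_i e is the sum over j_1, ..., j_{n-1} of
   (e q_i d_1 p_{j_1} e)(e q_{j_1} d_2 p_{j_2} e) ... (e q_{j_{n-1}} d_n p_i e),
   a product of degree-one elements of e D_{A/B} e = D_{eBe/eAe}.
   Below, j : 'I_n -> 'I_m encodes (i = j 0, j_1, ..., j_{n-1}) and the
   factor in slot l is e q_{j l} d_l p_{j (l+1 mod n)} e. *)
Definition trace_rep (e : A) (pq : seq (A * A)) n (Qs : seq ('I_n -> dder))
  : seq ('I_n -> dder) :=
  let m := size pq in
  let p := fun i : 'I_m => (nth (0, 0) pq i).1 in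
  let q := fun i : 'I_m => (nth (0, 0) pq i).2 in
  [seq (fun l : 'I_n =>
          dcorner e (dact (e * q (j l)) (ds l) (p (j (ordS l)) * e)))
  | ds <- Qs, j : {ffun 'I_n -> 'I_m} <- enum {ffun 'I_n -> 'I_m}].

End Tensors.

(* Main.v *)
Require Import Defs.
From Stdlib Require List.
From Stdlib Require Import FunctionalExtensionality.
From HB Require Import structures.
From mathcomp Require Import all_boot all_order all_algebra.
Import GRing.Theory.
Local Open Scope ring_scope.
Set Implicit Arguments.
Unset Strict Implicit.

Section Aux.
Variables (k : fieldType) (A : algType k).

Lemma tev_cat n (phi : ('I_n -> A) -> k) (x y : tensor A n) :
  tev phi (x ++ y) = tev phi x + tev phi y.
Proof. by rewrite /tev big_cat. Qed.

Lemma tev_nil n (phi : ('I_n -> A) -> k) : tev phi [::] = 0.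
Proof. by rewrite /tev big_nil. Qed.

Lemma tev_tmap n m (phi : ('I_m -> A) -> k) (f : ('I_n -> A) -> ('I_m -> A)) x :
  tev phi (tmap f x) = tev (fun a => phi (f a)) x.
Proof. by rewrite /tev /tmap big_map. Qed.

Lemma tev_tscale n (phi : ('I_n -> A) -> k) c x :
  tev phi (tscale c x) = c * tev phi x.
Proof. by rewrite /tev /tscale big_map mulr_sumr; apply: eq_bigr => p _; rewrite mulrA. Qed.

Lemma tev_tsum I n (phi : ('I_n -> A) -> k) (s : seq I) F :
  tev phi (tsum s F) = \sum_(i <- s) tev phi (F i).
Proof.
elim: s => [|i s IH]; first by rewrite big_nil /tsum /= tev_nil.
by rewrite big_cons -IH /tsum /= tev_cat.
Qed.

Lemma ml_slot (S1 S2 : A -> Prop) n (g : 'I_n -> A -> A) (phi : ('I_n -> A) -> k) :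
  (forall j c x y, g j (c *: x + y) = c *: g j x + g j y) ->
  (forall j x, S1 x -> S2 (g j x)) ->
  multilinear_on S2 phi -> multilinear_on S1 (fun a => phi (fun j => g j (a j))).
Proof.
move=> Hl HS Hp a i c x y Ha Hx Hy.
have E z : (fun j => g j (upd a i z j)) = upd (fun j => g j (a j)) i (g i z).
  by apply: functional_extensionality => j; rewrite /upd; case: eqP => [->|].
rewrite !E Hl; apply: Hp; [move=> j; exact: HS (Ha j) | exact: HS | exact: HS].
Qed.

Lemma ordS_eq n (i j : 'I_n) : (ord_pred j == i) = (j == ordS i).
Proof.
by apply/eqP/eqP => [<-|->]; [rewrite ord_predK | rewrite ordSK].
Qed.

Lemma ordS_eq' n (i j : 'I_n) : (ordS j == i) = (j == ord_pred i).
Proof.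
by apply/eqP/eqP => [<-|->]; [rewrite ordSK | rewrite ord_predK].
Qed.

Lemma tau_upd n (a : 'I_n -> A) i z :
  tau_tup (upd a i z) = upd (tau_tup a) (ordS i) z.
Proof. by apply: functional_extensionality => j; rewrite /tau_tup /upd ordS_eq. Qed.

Lemma tauinv_upd n (a : 'I_n -> A) i z :
  tauinv_tup (upd a i z) = upd (tauinv_tup a) (ord_pred i) z.
Proof. by apply: functional_extensionality => j; rewrite /tauinv_tup /upd ordS_eq'. Qed.

Lemma ml_tau (S : A -> Prop) n (phi : ('I_n -> A) -> k) :
  multilinear_on S phi -> multilinear_on S (fun a => phi (tau_tup a)).
Proof.
move=> Hp a i c x y Ha Hx Hy; rewrite !tau_upd; apply: Hp => // j; exact: Ha.
Qed.

Lemma ml_iter_tau (S : A -> Prop) n i (phi : ('I_n -> A) -> k) :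
  multilinear_on S phi -> multilinear_on S (fun a => phi (iter i (@tau_tup _ _ n) a)).
Proof.
elim: i phi => [|i IH] phi Hp //=.
move=> a i0 c x y Ha Hx Hy /=.
have := IH _ (ml_tau Hp) a i0 c x y Ha Hx Hy; by [].
Qed.

Lemma ml_zero (S : A -> Prop) n (phi : ('I_n -> A) -> k) a i :
  multilinear_on S phi -> all_in S a -> S 0 -> phi (upd a i 0) = 0.
Proof.
move=> Hp Ha H0; have := Hp a i (-1) 0 0 Ha H0 H0.
by rewrite scaler0 add0r mulN1r addNr.
Qed.

Lemma ml_sum (S : A -> Prop) n (phi : ('I_n -> A) -> k) a i I (s : seq I) (g : I -> A) :
  multilinear_on S phi -> all_in S a -> S 0 -> (forall x y, S x -> S y -> S (x + y)) ->
  (forall j, S (g j)) ->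
  phi (upd a i (\sum_(j <- s) g j)) = \sum_(j <- s) phi (upd a i (g j)).
Proof.
move=> Hp Ha H0 HD Hg; elim: s => [|j s IH]; first by rewrite !big_nil (ml_zero i Hp).
have Hs : S (\sum_(j <- s) g j) by elim: s {IH} => [|j' s IHs]; rewrite ?big_nil ?big_cons //; apply: HD.
by rewrite !big_cons -IH -(scale1r (g j)) Hp // mul1r scale1r.
Qed.


Lemma core_gen (S : A -> Prop) n m (phi : ('I_n -> A) -> k) (f : 'I_n -> 'I_m.+1 -> A) :
  multilinear_on S phi -> S 0 -> (forall x y, S x -> S y -> S (x + y)) ->
  (forall j r, S (f j r)) ->
  forall r : seq 'I_n, uniq r -> forall x, all_in S x ->
  \sum_(J in pfamily ord0 r (fun _ : 'I_n => predT))
      phi (fun j => if j \in r then f j (J j) else x j)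
  = phi (fun j => if j \in r then \sum_(t < m.+1) f j t else x j).
Proof.
move=> Hp H0 HD Hf.
have HsS j : S (\sum_(t < m.+1) f j t).
  by apply: (big_ind S) => //.
pose fIJ := {ffun 'I_n -> 'I_m.+1}.
elim=> [_ | i r IHr Ur0] x Hx.
  rewrite (big_pred1 [ffun=> ord0]); last first.
    move=> g; apply/familyP/eqP=> /= [Df |->{g} i]; last by rewrite ffunE !inE.
    by apply/ffunP=> i; rewrite ffunE; apply/eqP/Df.
  done.
case/andP: Ur0 => /negbTE nri Ur.
rewrite (partition_big (fun g : fIJ => g i) predT) //=.
pose y := fun l => if l \in r then \sum_(t < m.+1) f l t else x l.
have Hy : all_in S y by move=> l; rewrite /y; case: (l \in r).
have -> : (fun j => if j \in i :: r then \sum_(t < m.+1) f j t else x j)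
          = upd y i (\sum_(t < m.+1) f i t).
  apply: functional_extensionality => l; rewrite /upd /y inE.
  by case: eqP => [->|] //=.
rewrite (ml_sum i _ Hp Hy H0 HD) //.
apply: eq_bigr => j _.
pose seti j (g : fIJ) : fIJ := [ffun l => if l == i then j else g l].
rewrite (reindex_onto (seti j) (seti ord0)) => [|g /andP[_ /eqP gi]]; last first.
  by apply/ffunP=> l; rewrite !ffunE; case: eqP => // ->.
have Hx' : all_in S (upd x i (f i j)) by move=> l; rewrite /upd; case: eqP.
have -> : upd y i (f i j) = (fun l => if l \in r then \sum_(t < m.+1) f l t else upd x i (f i j) l).
  by apply: functional_extensionality => l; rewrite /upd /y; case: eqP => [->|]; rewrite ?nri.
rewrite -(IHr Ur _ Hx').
apply: eq_big => [g | g eq_g]; last first.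
  congr phi; apply: functional_extensionality => l; rewrite /upd /y !inE !ffunE.
  by case: eqP => [->|] //=; rewrite nri.
rewrite !ffunE !eqxx andbT. apply/andP/familyP=> /= [[Pjf fij0] l | Pff].
  have /[!(ffunE, inE)] := familyP Pjf l; case: eqP => // -> _.
  by rewrite nri -(eqP fij0) !ffunE !inE !eqxx.
(split; [apply/familyP | apply/eqP/ffunP]) => l; have /[!(ffunE, inE)]:= Pff l.
  by case: eqP => // ->.
by case: eqP => // ->; rewrite nri /= => /eqP.
Qed.


Lemma core (S : A -> Prop) n m (phi : ('I_n -> A) -> k) (f : 'I_n -> 'I_m -> A) :
  (0 < n)%N -> multilinear_on S phi -> S 0 -> (forall x y, S x -> S y -> S (x + y)) ->
  (forall j r, S (f j r)) ->
  \sum_(J : {ffun 'I_n -> 'I_m}) phi (fun j => f j (J j))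
  = phi (fun j => \sum_(t < m) f j t).
Proof.
move=> Hn Hp H0 HD Hf.
case: m f Hf => [|m] f Hf.
  rewrite big1; last by move=> J _; case: (J (Ordinal Hn)).
  have -> : (fun j => \sum_(t < 0) f j t) = upd (fun _ => 0) (Ordinal Hn) 0.
    by apply: functional_extensionality => j; rewrite big_ord0 /upd; case: eqP.
  by rewrite (ml_zero _ Hp) //.
have := core_gen Hp H0 HD Hf (enum_uniq 'I_n) (x := fun _ => 0) (fun _ => H0).
have E : forall g : 'I_n -> A, (fun j => if j \in enum 'I_n then g j else 0) = g.
  by move=> g; apply: functional_extensionality => j; rewrite mem_enum.
rewrite (E (fun j => \sum_(t < m.+1) f j t)) => <-.
apply: eq_big => // J; last by rewrite (E (fun j => f j (J j))).
symmetry; rewrite /= -[LHS]/(J \in pfamily ord0 (enum (mem (@predT (ordinal n)))) (fun=> predT)).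
by apply/familyP => j /=; rewrite mem_enum.
Qed.


Lemma prodl_map (L L' : nat -> tensor A 2) (H : nat -> ('I_2 -> A) -> ('I_2 -> A)) m :
  (forall i, L' i = [seq (p.1, H i p.2) | p <- L i]) ->
  prodl L' m = [seq (c.1, fun i => if (i < m)%N then H i (c.2 i) else c.2 i) | c <- prodl L m].
Proof.
move=> HL; elim: m => [|m IH] /=.
  by congr [:: (_, _)].
rewrite IH HL allpairs_mapl allpairs_mapr map_allpairs.
apply: eq_allpairs => c q /=; congr (_, _).
apply: functional_extensionality => i.
case: (ltngtP i m) => [lt|gt|->].
- by rewrite ltnS (ltnW lt).
- by rewrite ltnNge gt.
- by rewrite ltnSn.
Qed.

End Aux.

Section Main.
Variables (k : fieldType) (A : algType k) (e : A).
Hypothesis He : e * e = e.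

Lemma mulee (u : A) : u * e * e = u * e.
Proof. by rewrite -mulrA He. Qed.

Lemma e_simp (X P Q Y : A) :
  e * (X * (P * e)) * e * (e * (e * Q * Y) * e) = e * X * (P * e * Q) * (Y * e).
Proof. by rewrite !mulrA !mulee. Qed.

Lemma corner_e (x : A) : corner e (e * x * e).
Proof. by rewrite /corner !mulrA He mulee. Qed.

Lemma corner0 : corner e 0.
Proof. by rewrite /corner mulr0 mul0r. Qed.

Lemma cornerD x y : corner e x -> corner e y -> corner e (x + y).
Proof. by rewrite /corner => Hx Hy; rewrite mulrDr mulrDl Hx Hy. Qed.

Lemma key n (Hn : (0 < n)%N) (pq : seq (A * A))
  (Hsum : \sum_(x <- pq) x.1 * e * x.2 = 1)
  (psi : ('I_n -> A) -> k) (Hpsi : multilinear_on (corner e) psi)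
  (ds : 'I_n -> dder A) (b : 'I_n -> A) :
  \sum_(J <- enum {ffun 'I_n -> 'I_(size pq)})
    tev psi (brtilde (fun l : 'I_n => dcorner e (dact (e * (nth (0,0) pq (J l)).2) (ds l)
                                                   ((nth (0,0) pq (J (ordS l))).1 * e))) b)
  = tev (fun a => psi (fun j => e * a j * e)) (brtilde ds b).
Proof.
set m := size pq.
pose P (r : 'I_m) := (nth (0,0) pq r).1.
pose Q (r : 'I_m) := (nth (0,0) pq r).2.
pose L := (fun i => if insub i is Some j then ds j (b j) else [::]).
have E1 : forall J : {ffun 'I_n -> 'I_m},
  tev psi (brtilde (fun l : 'I_n => dcorner e (dact (e * Q (J l)) (ds l) (P (J (ordS l)) * e))) b)
  = \sum_(c <- prodl L n) c.1 * psi (fun j => (e * c.2 (val (ord_pred j)) fst2)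
          * (P (J j) * e * Q (J j)) * (c.2 (val j) snd2 * e)).
  move=> J; rewrite /brtilde /tev big_map.
  rewrite (prodl_map (L := L) (H := fun i t => if insub i is Some l then
     (fun s : 'I_2 => e * (if s == fst2 then t fst2 * (P (J (ordS l)) * e)
                          else (e * Q (J l)) * t snd2) * e) else t)).
    rewrite big_map; apply: eq_bigr => c _; congr (_ * psi _).
    apply: functional_extensionality => j; cbn [fst snd]; rewrite !ltn_ord !valK ord_predK.
    exact: e_simp.
  move=> i; rewrite /L; case: insubP => [l _ _|_] //=.
  by rewrite /dcorner /tsand /tmap /dact -!map_comp.
rewrite big_enum /=.
under eq_bigr do rewrite E1.
rewrite exchange_big /tev big_map /=; apply: eq_bigr => c _.
rewrite -mulr_sumr; congr (_ * _).
rewrite (core (f := fun j r => (e * c.2 (val (ord_pred j)) fst2) * (P r * e * Q r) * (c.2 (val j) snd2 * e)) Hn Hpsi).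
- congr psi; apply: functional_extensionality => j.
  rewrite -mulr_suml -mulr_sumr.
  have -> : \sum_(i < m) P i * e * Q i = 1.
    by rewrite -Hsum (big_nth (0,0)) big_mkord.
  by rewrite mulr1 !mulrA.
- exact: corner0.
- exact: cornerD.
- move=> j r; rewrite /corner; rewrite !mulrA He mulee //.
Qed.


Lemma iter_tau_sand n i (b : 'I_n -> A) :
  iter i (@tau_tup _ _ n) (fun j => e * b j * e) = fun j => e * iter i (@tau_tup _ _ n) b j * e.
Proof. by elim: i => [|i IH] //=; rewrite IH. Qed.

Lemma sand_ml n (phi : ('I_n -> A) -> k) :
  multilinear_on (corner e) phi ->
  multilinear_on (fun _ => True) (fun a => phi (fun j => e * a j * e)).
Proof.
apply: (ml_slot (g := fun _ x => e * x * e)).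
  by move=> _ c x y; rewrite mulrDr mulrDl -scalerAr -scalerAl.
by move=> _ x _; exact: corner_e.
Qed.

Lemma trace_tev n (Hn : (0 < n)%N) (pq : seq (A * A))
  (Hsum : \sum_(x <- pq) x.1 * e * x.2 = 1) (Qs : seq ('I_n -> dder A))
  (phi : ('I_n -> A) -> k) (Hphi : multilinear_on (corner e) phi) (a : 'I_n -> A) :
  tev phi (brQ (trace_rep e pq Qs) a) = tev (fun b => phi (fun j => e * b j * e)) (brQ Qs a).
Proof.
rewrite /brQ !tev_tsum /trace_rep big_allpairs_dep; apply: eq_bigr => ds _.
rewrite /brQ1.
under eq_bigr do rewrite tev_tsum.
rewrite tev_tsum exchange_big; apply: eq_bigr => i _.
under eq_bigr do rewrite tev_tscale tev_tmap.
rewrite tev_tscale tev_tmap -mulr_sumr; congr (_ * _).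
rewrite (key Hn Hsum (ml_iter_tau i Hphi)).
by apply: eq_bigr => c _; rewrite iter_tau_sand.
Qed.

End Main.

Section Brk.
Variables (k : fieldType) (A : algType k) (B : A -> Prop) (e : A) (n : nat).
Hypothesis He : e * e = e.
Hypothesis HeB : B e.
Hypothesis Hn : (0 < n)%N.
Variable br : ('I_n -> A) -> tensor A n.
Hypothesis Hbr : is_bracket (fun _ => True) B br.

Lemma ilast_lt : (n.-1 < n)%N.
Proof. by rewrite prednK. Qed.
Definition ilast : 'I_n := Ordinal ilast_lt.

Lemma updl_upd (a : 'I_n -> A) z : updl a z = upd a ilast z.
Proof. by []. Qed.


Lemma ml_lm (c : A) (chi : ('I_n -> A) -> k) :
  multilinear_on (fun _ => True) chi ->
  multilinear_on (fun _ => True) (fun a => chi (fun j => if val j == 0%N then c * a j else a j)).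
Proof.
apply: (ml_slot (g := fun j z => if val j == 0%N then c * z else z)) => //.
by move=> j d x y; case: (val j == 0%N) => //; rewrite mulrDr -scalerAr.
Qed.

Lemma ml_rm (c : A) (chi : ('I_n -> A) -> k) :
  multilinear_on (fun _ => True) chi ->
  multilinear_on (fun _ => True) (fun a => chi (fun j => if val j == n.-1 then a j * c else a j)).
Proof.
apply: (ml_slot (g := fun j z => if val j == n.-1 then z * c else z)) => //.
by move=> j d x y; case: (val j == n.-1) => //; rewrite mulrDl -scalerAl.
Qed.

Lemma van (chi : ('I_n -> A) -> k) a :
  multilinear_on (fun _ => True) chi -> tev chi (br (updl a e)) = 0.
Proof.
case: Hbr => _ _ Hvan _ _ Hchi.
have HBe : B (updl a e ilast) by rewrite /updl /= eqxx.
by rewrite (Hvan (updl a e) ilast (fun _ => I) HBe chi Hchi) tev_nil.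
Qed.

Lemma der (chi : ('I_n -> A) -> k) a x y :
  multilinear_on (fun _ => True) chi ->
  tev chi (br (updl a (x * y))) =
  tev chi (tlmul x (br (updl a y))) + tev chi (trmul (br (updl a x)) y).
Proof.
case: Hbr => _ _ _ Hder _ Hchi.
by rewrite (Hder a x y (fun _ => I) I I chi Hchi) tev_cat.
Qed.

Definition sandf (phi : ('I_n -> A) -> k) := fun b : 'I_n -> A => phi (fun j => e * b j * e).

Lemma lastslot (phi : ('I_n -> A) -> k) a x :
  multilinear_on (corner e) phi ->
  tev (sandf phi) (br (updl a (e * x * e))) = tev (sandf phi) (br (updl a x)).
Proof.
move=> Hphi; have Hpsi := sand_ml He Hphi.
rewrite -mulrA der // /trmul tev_tmap van ?addr0; last exact: ml_rm.
rewrite /tlmul tev_tmap der; last exact: ml_lm.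
rewrite /tlmul tev_tmap van ?add0r; last exact: (ml_lm x (ml_lm e Hpsi)).
rewrite /trmul tev_tmap /tev; apply: eq_bigr => p _; congr (_ * phi _).
apply: functional_extensionality => j /=.
by case: (val j == n.-1); case: (val j == 0%N); rewrite ?mulrA ?He ?mulee.
Qed.

Lemma sign_sq : ((-1) ^+ n.+1 : k) * (-1) ^+ n.+1 = 1.
Proof. by rewrite -exprMn mulrNN mulr1 expr1n. Qed.

Lemma rot (chi : ('I_n -> A) -> k) a :
  multilinear_on (fun _ => True) chi ->
  tev chi (br a) = (-1) ^+ n.+1 * tev (fun b => chi (tau_tup b)) (br (tauinv_tup a)).
Proof.
case: Hbr => _ _ _ _ Hcyc Hchi.
have := Hcyc a (fun _ => I) chi Hchi.
rewrite tev_tscale /tau_t tev_tmap => ->.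
by rewrite mulrA sign_sq mul1r.
Qed.

Definition Cslot (i : 'I_n) := forall phi, multilinear_on (corner e) phi ->
  forall a x, tev (sandf phi) (br (upd a i (e * x * e))) = tev (sandf phi) (br (upd a i x)).

Lemma C_last : Cslot ilast.
Proof. by move=> phi Hphi a x; rewrite -!updl_upd lastslot. Qed.

Lemma C_step i : Cslot (ord_pred i) -> Cslot i.
Proof.
move=> IH phi Hphi a x.
rewrite (rot _ (sand_ml He Hphi)) [RHS](rot _ (sand_ml He Hphi)) !tauinv_upd.
congr (_ * _).
exact: (IH _ (ml_tau Hphi) (tauinv_tup a) x).
Qed.

Lemma C_all i : Cslot i.
Proof.
case: i => t Ht; elim: t Ht => [|t IH] Ht.
  apply: C_step.
  have -> : ord_pred (Ordinal Ht) = ilast.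
    by apply: val_inj; rewrite /= add0n modn_small // ilast_lt.
  exact: C_last.
apply: C_step.
have -> : ord_pred (Ordinal Ht) = Ordinal (ltnW Ht).
  by apply: val_inj => /=; rewrite modnDr modn_small // ltnW.
exact: IH.
Qed.

Lemma well_def (phi : ('I_n -> A) -> k) a :
  multilinear_on (corner e) phi ->
  tev (sandf phi) (br (fun j => e * a j * e)) = tev (sandf phi) (br a).
Proof.
move=> Hphi.
have H : forall t, (t <= n)%N ->
    tev (sandf phi) (br (fun j => if (val j < t)%N then e * a j * e else a j))
    = tev (sandf phi) (br a).
  elim => [|t IH] Ht.
    by congr (tev _ (br _)); apply: functional_extensionality => j; rewrite ltn0.
  have Ht' : (t < n)%N := Ht.
  rewrite -IH; last exact: ltnW.
  set X := (fun j : 'I_n => if (val j < t)%N then e * a j * e else a j).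
  have E1 : (fun j : 'I_n => if (val j < t.+1)%N then e * a j * e else a j)
            = upd X (Ordinal Ht') (e * a (Ordinal Ht') * e).
    apply: functional_extensionality => j; rewrite /upd /X.
    case: (eqVneq j (Ordinal Ht')) => [->|ne] /=; first by rewrite ltnSn.
    rewrite ltnS leq_eqVlt (_ : (val j == t) = false) //.
    apply/negbTE; apply: contra ne => /eqP Hj; apply/eqP/val_inj.
    by rewrite Hj.
  have E2 : X = upd X (Ordinal Ht') (a (Ordinal Ht')).
    apply: functional_extensionality => j; rewrite /upd /X.
    by case: eqVneq => [->|] //=; rewrite ltnn.
  by rewrite E1 (C_all (Ordinal Ht') Hphi) -E2.
have := H n (leqnn n).
have -> : (fun j : 'I_n => if (val j < n)%N then e * a j * e else a j) = (fun j => e * a j * e).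
  by apply: functional_extensionality => j; rewrite ltn_ord.
done.
Qed.

End Brk.

Unset Implicit Arguments.
Theorem proposition2p7 (k : fieldType) (A : algType k)
  (char0 : [pchar k] =i pred0)
  (B : A -> Prop) (HB : is_subalg B)
  (e : A) (HeB : B e) (He : e * e = e)
  (n : nat) (Hn : (0 < n)%N)
  (br : ('I_n -> A) -> tensor A n)
  (Hbr : is_bracket (fun _ => True) B br) :
  (* existence of the induced eBe-linear n-bracket on eAe *)
  (exists br' : ('I_n -> A) -> tensor A n,
      is_bracket (corner e) (cornerB e B) br' /\ induced_by e br br') /\
  (* uniqueness *)
  (forall br1 br2 : ('I_n -> A) -> tensor A n,
      is_bracket (corner e) (cornerB e B) br1 -> induced_by e br br1 ->
      is_bracket (corner e) (cornerB e B) br2 -> induced_by e br br2 ->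
      forall a, all_in (corner e) a -> teq_on (corner e) (br1 a) (br2 a)) /\
  (* differential case *)
  (forall (pq : seq (A * A)) (Qs : seq ('I_n -> dder A)),
      (forall x, x \in pq -> B x.1 /\ B x.2) ->
      \sum_(x <- pq) x.1 * e * x.2 = 1 ->
      (forall ds, Stdlib.Lists.List.In ds Qs -> forall i, is_dder (fun _ => True) B (ds i)) ->
      is_differential (fun _ => True) br Qs ->
      forall br' : ('I_n -> A) -> tensor A n,
        induced_by e br br' ->
        is_differential (corner e) br' (trace_rep e pq Qs)).
Proof.
have Ea : forall a : 'I_n -> A, all_in (corner e) a -> a = (fun i => e * a i * e).
  by move=> a Ha; apply: functional_extensionality => i; rewrite (Ha i).
split; [|split].
- exists (fun a => tsand e (br a)); split; last first.
    move=> a phi Hphi; rewrite !tev_tmap.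
    exact: (well_def He HeB Hn Hbr a Hphi).
  case: (Hbr) => Hval Hlin Hvan Hder Hcyc.
  split.
  + move=> a _ p /List.in_map_iff [q [<- _]] j /=; exact: corner_e.
  + move=> a i c x y Ha Hx Hy phi Hphi.
    rewrite tev_tmap (Hlin a i c x y (fun _ => I) I I _ (sand_ml He Hphi)).
    by rewrite !tev_cat !tev_tscale !tev_tmap.
  + move=> a i Ha [b Bb Hab] phi Hphi.
    have HBa : B (a i).
      have [_ _ _ HM] := HB.
      by rewrite Hab; apply: (HM) => //; apply: (HM).
    by rewrite tev_tmap (Hvan a i (fun _ => I) HBa _ (sand_ml He Hphi)) /tzero !tev_nil.
  + move=> a x y Ha Hx Hy phi Hphi.
    rewrite tev_tmap (Hder a x y (fun _ => I) I I _ (sand_ml He Hphi)) !tev_cat.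
    rewrite /tlmul /trmul !tev_tmap; congr (_ + _); rewrite /tev; apply: eq_bigr => p _;
      congr (_ * phi _); apply: functional_extensionality => j /=.
      case: (val j == 0%N) => //.
      by rewrite -[in LHS]Hx -[in RHS]Hx !mulrA ?He ?mulee.
    case: (val j == n.-1) => //.
    by rewrite -[in LHS]Hy -[in RHS]Hy !mulrA ?He ?mulee.
  + move=> a Ha phi Hphi.
    have := Hcyc a (fun _ => I) _ (sand_ml He Hphi).
    rewrite /tau_t !tev_tmap !tev_tscale !tev_tmap; exact.
- move=> br1 br2 _ H1 _ H2 a Ha phi Hphi.
  have E1 := H1 a phi Hphi; have E2 := H2 a phi Hphi.
  rewrite -Ea // in E1 E2; by rewrite E1 E2.
- move=> pq Qs _ Hsum _ Hdiff br' Hind a Ha phi Hphi.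
  have E1 := Hind a phi Hphi; rewrite -Ea // in E1.
  rewrite E1 tev_tmap (Hdiff a (fun _ => I) _ (sand_ml He Hphi)).
  by rewrite (trace_tev He Hn Hsum Qs Hphi).
Qed.
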